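(* In the setting described in the context, if the operator $-i\,\Sigma^*\circ\Upsilon$ on $K^\partial\oplus K^\partial$ is positive definite, then $P+\varepsilon$ is an isomorphism $\mathcal D(P)\to H_0\oplus H_0$.
   Context: Inner products are linear in the first argument and conjugate-linear in the second. $H_0$ is a separable Hilbert space, $T$ a closed densely defined symmetric operator in $H_0$ with adjoint $T^*$; $H_1\subset H_0$ a dense subspace which is a Hilbert space with bounded inclusion, $H_1\subset\mathcal D(T^* )$. $K^\partial$ is a separable Hilbert space with inner product $\langle\cdot,\cdot\rangle_\partial$, $K\subset K^\partial$ a dense Hilbert subspace, and $\gamma:H_1\to K\oplus K$ a bounded surjective operator with $\mathcal D(T)=\operatorname{Ker}\gamma$. $\Sigma$ is a bounded invertible self-adjoint operator on $K^\partial\oplus K^\partial$ leaving $K\oplus K$ invariant, and $\langle T^*u,v\rangle-\langle u,T^*v\rangle=\langle i\Sigma\gamma u,\gamma v\rangle_\partial$ for all $u,v\in H_1$. $\Upsilon$ is a unitary operator on $K^\partial\oplus K^\partial$ leaving $K\oplus K$ invariant and commuting with $\Sigma$. Let $S=T\oplus(-T)$ in $H_0\oplus H_0$ (domain $\operatorname{Ker}\gamma\oplus\operatorname{Ker}\gamma$), so $S^*=T^*\oplus(-T^* )$. Let $P$ be the restriction of $S^*$ to $\{(a,b)\in H_1\oplus H_1:\gamma b=\Upsilon\gamma a\}$, i.e. $P(a,b)=(T^*a,-T^*b)$ on this domain; assume $P$ is a self-adjoint Fredholm operator in $H_0\oplus H_0$. Let $\varepsilon=\begin{pmatrix}0&1\\1&0\end{pmatrix}$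 on $H_0\oplus H_0$, i.e. $\varepsilon(a,b)=(b,a)$. *)

(* Defs.v *)
From mathcomp Require Import all_boot all_order all_algebra.
From mathcomp.real_closed Require Import complex.
From mathcomp Require Import reals.
Set Implicit Arguments. Unset Strict Implicit. Unset Printing Implicit Defensive.
Import Order.TTheory GRing.Theory Num.Theory.
Local Open Scope ring_scope.

Section Hilbert.
Variable R : realType.
Notation C := (R[i]).

Section OneSpace.
Variable V : lmodType C.
Variable ip : V -> V -> C.  (* linear in 1st argument, conjugate-linear in 2nd *)

Definition hnorm (x : V) : C := sqrtC (ip x x).

Definition hcvg (u : nat -> V) (x : V) : Prop :=
  forall e : C, 0 < e -> exists N, forall n, (N <= n)%N -> hnorm (u n - x) < e.

Definition hcauchy (u : nat -> V) : Prop :=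
  forall e : C, 0 < e -> exists N, forall m n, (N <= m)%N -> (N <= n)%N ->
    hnorm (u m - u n) < e.

Definition is_hilbert : Prop :=
  [/\ forall (a : C) (x y z : V), ip (a *: x + y) z = a * ip x z + ip y z,
      forall x y : V, ip y x = (ip x y)^*,
      forall x : V, 0 <= ip x x,
      forall x : V, ip x x = 0 -> x = 0
    & forall u : nat -> V, hcauchy u -> exists x, hcvg u x].

Definition separable : Prop :=
  exists d : nat -> V, forall x e, 0 < e -> exists n, hnorm (x - d n) < e.

Definition dense (D : V -> Prop) : Prop :=
  forall x e, 0 < e -> exists y, D y /\ hnorm (x - y) < e.

Definition subspace (D : V -> Prop) : Prop :=
  D 0 /\ forall (a : C) x y, D x -> D y -> D (a *: x + y).

Definition lin_on (D : V -> Prop) (A : V -> V) : Prop :=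
  subspace D /\ forall (a : C) x y, D x -> D y -> A (a *: x + y) = a *: A x + A y.

Definition is_adjoint (D : V -> Prop) (A : V -> V) (Ds : V -> Prop) (As : V -> V) :=
  forall v w, (Ds v /\ As v = w) <-> (forall u, D u -> ip (A u) v = ip u w).

Definition closed_op (D : V -> Prop) (A : V -> V) : Prop :=
  forall (u : nat -> V) x y, (forall n, D (u n)) -> hcvg u x ->
    hcvg (fun n => A (u n)) y -> D x /\ A x = y.

Definition symmetric_op (D : V -> Prop) (A : V -> V) : Prop :=
  forall u v, D u -> D v -> ip (A u) v = ip u (A v).

Definition selfadjoint_op (D : V -> Prop) (A : V -> V) : Prop :=
  dense D /\ lin_on D A /\ is_adjoint D A D A.

Definition in_span (s : seq V) (x : V) : Prop :=
  exists c : nat -> C, x = \sum_(i < size s) c i *: s`_i.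

(* (possibly unbounded) Fredholm operator: closed, finite-dimensional kernel,
   closed range of finite codimension *)
Definition fredholm_op (D : V -> Prop) (A : V -> V) : Prop :=
  [/\ lin_on D A, closed_op D A,
      exists s : seq V, forall x, D x -> A x = 0 -> in_span s x,
      forall (u : nat -> V) y, (forall n, D (u n)) -> hcvg (fun n => A (u n)) y ->
        exists x, D x /\ A x = y
    & exists s : seq V, forall y, exists x, D x /\ in_span s (y - A x)].
End OneSpace.

Definition linmap (U V : lmodType C) (f : U -> V) : Prop :=
  forall (a : C) x y, f (a *: x + y) = a *: f x + f y.

Definition bounded (U V : lmodType C) (ipU : U -> U -> C) (ipV : V -> V -> C)
  (f : U -> V) : Prop :=
  exists c : C, forall x, hnorm ipV (f x) <= c * hnorm ipU x.

Definition ip_sum (U : lmodType C) (ip : U -> U -> C) (x y : U * U) : C :=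
  ip x.1 y.1 + ip x.2 y.2.

Definition dsmap (U V : Type) (f : U -> V) (x : U * U) : V * V := (f x.1, f x.2).

Definition epsop (U : Type) (x : U * U) : U * U := (x.2, x.1).

End Hilbert.

(* Main.v *)
Require Import Defs.
From mathcomp Require Import all_boot all_order all_algebra.
From mathcomp.real_closed Require Import complex.
From mathcomp Require Import reals.
From mathcomp Require Import ring lra.
From Stdlib Require Import IndefiniteDescription.
Import Order.TTheory GRing.Theory Num.Theory.
Local Open Scope ring_scope.

Section Gen.
Variable R : realType.
Local Notation C := (R[i]).
Local Notation RE := complex.Re.
Local Notation IM := complex.Im.
Local Notation "x %:C" := (x%:C)%C (at level 1, format "x %:C") : ring_scope.

Lemma REM (a b : C) : RE (a*b) = RE a * RE b - IM a * IM b.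
Proof. by case: a => ??; case: b. Qed.
Lemma IMM (a b : C) : IM (a*b) = RE a * IM b + IM a * RE b.
Proof. by case: a => ??; case: b. Qed.
Lemma RED (a b : C) : RE (a+b) = RE a + RE b.
Proof. by case: a => ??; case: b. Qed.
Lemma IMD (a b : C) : IM (a+b) = IM a + IM b.
Proof. by case: a => ??; case: b. Qed.
Lemma REN (a : C) : RE (-a) = - RE a.
Proof. by case: a. Qed.
Lemma IMN (a : C) : IM (-a) = - IM a.
Proof. by case: a. Qed.
Lemma REJ (a : C) : RE (a^*) = RE a.
Proof. by case: a. Qed.
Lemma IMJ (a : C) : IM (a^*) = - IM a.
Proof. by case: a. Qed.
Lemma REc (r : R) : RE (r%:C) = r. Proof. by []. Qed.
Lemma IMc (r : R) : IM (r%:C) = 0. Proof. by []. Qed.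
Lemma RE0 : RE (0 : C) = 0. Proof. by []. Qed.
Lemma IM0 : IM (0 : C) = 0. Proof. by []. Qed.
Lemma REi : RE ('i : C) = 0. Proof. by []. Qed.
Lemma IMi : IM ('i : C) = 1. Proof. by []. Qed.
Lemma ceq (a b : C) : RE a = RE b -> IM a = IM b -> a = b.
Proof. by case: a => ??; case: b => ?? /= -> ->. Qed.
Lemma ge0_real (a : C) : 0 <= a -> a = (RE a)%:C.
Proof. move=> h; apply: ceq => //=; exact: ger0_Im. Qed.
Lemma lecRE (a b : C) : IM a = IM b -> (a <= b) = (RE a <= RE b).
Proof. by move=> h; rewrite lecE h eqxx. Qed.
Lemma ltcRE (a b : C) : IM a = IM b -> (a < b) = (RE a < RE b).
Proof. by move=> h; rewrite ltcE h eqxx. Qed.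
Lemma sqrtC_real (r : R) : 0 <= r -> sqrtC (r%:C) = (Num.sqrt r)%:C.
Proof.
move=> r0.
have -> : r%:C = ((Num.sqrt r)%:C) ^+ 2.
  by rewrite -rmorphXn /= sqr_sqrtr.
by rewrite sqrCK // lecR sqrtr_ge0.
Qed.

Lemma small (r : R) : 0 < r -> exists N, forall n, (N <= n)%N -> (n.+1%:R)^-1 < r.
Proof.
move=> r0; exists (Num.Def.archi_bound r^-1) => n hn.
rewrite invf_plt ?posrE ?ltr0Sn //.
apply: (lt_le_trans (archi_boundP _)); first by rewrite invr_ge0 ltW.
by rewrite ler_nat; apply: leq_trans hn _.
Qed.

Lemma smallle (N n : nat) : (N <= n)%N -> (n.+1%:R)^-1 <= (N.+1%:R)^-1 :> R.
Proof.
move=> h; rewrite lef_pV2 ?posrE ?ltr0Sn // ler_nat; by [].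
Qed.

Section IP.
Variable V : lmodType C.
Variable ip : V -> V -> C.
Variable hV : is_hilbert ip.

Lemma ipL (a : C) x y z : ip (a *: x + y) z = a * ip x z + ip y z.
Proof. by case: hV => h *; apply: h. Qed.
Lemma ipJ x y : ip y x = (ip x y)^*.
Proof. by case: hV => _ h *; apply: h. Qed.
Lemma ipP x : 0 <= ip x x.
Proof. by case: hV => _ _ h *; apply: h. Qed.
Lemma ipD x : ip x x = 0 -> x = 0.
Proof. by case: hV => _ _ _ h *; apply: h. Qed.

Lemma ip0l z : ip 0 z = 0.
Proof.
have := ipL 1 0 0 z; rewrite scaler0 add0r mul1r -{1}(addr0 (ip 0 z)).
by move/addrI.
Qed.
Lemma ipDl x y z : ip (x + y) z = ip x z + ip y z.
Proof. by have := ipL 1 x y z; rewrite scale1r mul1r. Qed.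
Lemma ipZl a x z : ip (a *: x) z = a * ip x z.
Proof. by have := ipL a x 0 z; rewrite addr0 ip0l addr0. Qed.
Lemma ipNl x z : ip (- x) z = - ip x z.
Proof. by rewrite -scaleN1r ipZl mulN1r. Qed.
Lemma ipBl x y z : ip (x - y) z = ip x z - ip y z.
Proof. by rewrite ipDl ipNl. Qed.
Lemma ip0r z : ip z 0 = 0.
Proof. by rewrite ipJ ip0l conjC0. Qed.
Lemma ipDr x y z : ip z (x + y) = ip z x + ip z y.
Proof. by rewrite ipJ ipDl rmorphD /= -!ipJ. Qed.
Lemma ipZr a x z : ip z (a *: x) = a^* * ip z x.
Proof. by rewrite ipJ ipZl rmorphM /= -ipJ. Qed.
Lemma ipNr x z : ip z (- x) = - ip z x.
Proof. by rewrite -scaleN1r ipZr conjCN1 mulN1r. Qed.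
Lemma ipBr x y z : ip z (x - y) = ip z x - ip z y.
Proof. by rewrite ipDr ipNr. Qed.

Definition n2 x := RE (ip x x).
Definition re x y := RE (ip x y).

Lemma ipxx x : ip x x = (n2 x)%:C.
Proof. exact: ge0_real (ipP x). Qed.
Lemma n2_ge0 x : 0 <= n2 x.
Proof. by rewrite -lecR -ipxx ipP. Qed.
Lemma n2_eq0 x : n2 x = 0 -> x = 0.
Proof. by move=> h; apply: ipD; rewrite ipxx h. Qed.
Lemma reC x y : re x y = re y x.
Proof. by rewrite /re (ipJ x y) REJ. Qed.
Lemma reDl x y z : re (x + y) z = re x z + re y z.
Proof. by rewrite /re ipDl RED. Qed.
Lemma reDr x y z : re z (x + y) = re z x + re z y.
Proof. by rewrite /re ipDr RED. Qed.
Lemma reNl x z : re (- x) z = - re x z.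
Proof. by rewrite /re ipNl REN. Qed.
Lemma reNr x z : re z (- x) = - re z x.
Proof. by rewrite /re ipNr REN. Qed.
Lemma n2D x y : n2 (x + y) = n2 x + n2 y + 2 * re x y.
Proof.
rewrite /n2 ipDl !ipDr !RED -/(re x y) -/(re y x) reC /re; lra.
Qed.
Lemma n2N x : n2 (- x) = n2 x.
Proof. by rewrite /n2 ipNl ipNr opprK. Qed.
Lemma n2B x y : n2 (x - y) = n2 x + n2 y - 2 * re x y.
Proof. rewrite n2D n2N reNr; lra. Qed.
Lemma n2Bs x y : n2 (x - y) = n2 (y - x).
Proof. by rewrite -n2N opprB. Qed.
Lemma n2Zc (a : C) x : n2 (a *: x) = RE (a * a^*) * n2 x.
Proof. by rewrite /n2 ipZl ipZr mulrA ipxx; case: (a * a^*) => ?? /=; rewrite mulr0 subr0. Qed.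
Lemma conj_real (t : R) : (t%:C)^* = t%:C :> C.
Proof. by apply: ceq; rewrite ?REJ ?IMJ //= oppr0. Qed.
Lemma n2Zr (t : R) x : n2 (t%:C *: x) = t ^+ 2 * n2 x.
Proof. by rewrite n2Zc conj_real REM /= mulr0 subr0 expr2. Qed.
Lemma reZlr (t : R) x y : re (t%:C *: x) y = t * re x y.
Proof. by rewrite /re ipZl REM /= mul0r subr0. Qed.
Lemma reZrc (a : C) x y : re x (a *: y) = RE (a^* * ip x y).
Proof. by rewrite /re ipZr. Qed.

Lemma ineq_t (t : R) x y : 2 * t * re x y <= t ^+ 2 * n2 x + n2 y.
Proof.
have := n2_ge0 (t%:C *: x - y); rewrite n2B n2Zr reZlr; lra.
Qed.
Lemma n2D_le x y : n2 (x + y) <= 2 * n2 x + 2 * n2 y.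
Proof. have := ineq_t 1 x y; rewrite n2D; lra. Qed.
Lemma n2D_le_t (t : R) x y : 0 < t ->
  t * n2 (x + y) <= t * (1 + t) * n2 x + (t + 1) * n2 y.
Proof. move=> t0; have := ineq_t t x y; rewrite n2D; nra. Qed.

Definition cvg2 (u : nat -> V) x := forall r : R, 0 < r ->
  exists N, forall n, (N <= n)%N -> n2 (u n - x) < r.
Definition cauchy2 (u : nat -> V) := forall r : R, 0 < r ->
  exists N, forall m n, (N <= m)%N -> (N <= n)%N -> n2 (u m - u n) < r.

Lemma hnormE x : hnorm ip x = (Num.sqrt (n2 x))%:C.
Proof. by rewrite /hnorm ipxx sqrtC_real // n2_ge0. Qed.

Lemma hnorm_lt (e : C) x : 0 < e -> (hnorm ip x < e) = (n2 x < RE e ^+ 2).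
Proof.
move=> e0; have e0' := ltW e0.
rewrite hnormE {1}(@ge0_real e e0') ltcR.
have he : 0 < RE e by rewrite -ltcR -ge0_real.
rewrite -{1}(ger0_norm (ltW he)) -sqrtr_sqr ltr_sqrt //.
by rewrite exprn_gt0.
Qed.

Lemma hcvgP u x : hcvg ip u x <-> cvg2 u x.
Proof.
split=> h r r0.
- have e0 : 0 < (Num.sqrt r)%:C :> C by rewrite ltcR sqrtr_gt0.
  have [N hN] := h _ e0; exists N => n /hN.
  by rewrite hnorm_lt //= sqr_sqrtr // ltW.
- have r0' : 0 < RE r ^+ 2.
    by rewrite exprn_gt0 // -ltcR -ge0_real // ltW.
  have [N hN] := h _ r0'; exists N => n /hN.
  by rewrite hnorm_lt.
Qed.

Lemma hcauchyP u : hcauchy ip u <-> cauchy2 u.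
Proof.
split=> h r r0.
- have e0 : 0 < (Num.sqrt r)%:C :> C by rewrite ltcR sqrtr_gt0.
  have [N hN] := h _ e0; exists N => m n hm hn.
  by have := hN m n hm hn; rewrite hnorm_lt //= sqr_sqrtr // ltW.
- have r0' : 0 < RE r ^+ 2.
    by rewrite exprn_gt0 // -ltcR -ge0_real // ltW.
  have [N hN] := h _ r0'; exists N => m n hm hn.
  by rewrite hnorm_lt // hN.
Qed.

Lemma complete u : cauchy2 u -> exists x, cvg2 u x.
Proof.
move/hcauchyP => h; case: hV => _ _ _ _ hc.
by have [x /hcvgP hx] := hc u h; exists x.
Qed.

Lemma cvg_cauchy u x : cvg2 u x -> cauchy2 u.
Proof.
move=> h r r0.
have r4 : 0 < r / 4 by rewrite divr_gt0.
have [N hN] := h _ r4; exists N => m n hm hn.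
have := n2D_le (u m - x) (x - u n).
rewrite addrA subrK n2Bs.
have := hN m hm; have := hN n hn; lra.
Qed.

Lemma le0_eq0 (a : R) : (forall r, 0 < r -> a < r) -> a <= 0.
Proof.
move=> h; apply/ler_addgt0Pr => e e0; rewrite add0r; exact: ltW (h e e0).
Qed.

Lemma cvg_uniq u x y : cvg2 u x -> cvg2 u y -> x = y.
Proof.
move=> hx hy; apply/eqP; rewrite -subr_eq0; apply/eqP; apply: n2_eq0.
apply/eqP; rewrite eq_le n2_ge0 andbT; apply: le0_eq0 => r r0.
have r4 : 0 < r / 4 by rewrite divr_gt0.
have [N1 h1] := hx _ r4; have [N2 h2] := hy _ r4.
have := n2D_le (x - u (maxn N1 N2)) (u (maxn N1 N2) - y).
rewrite addrA subrK n2Bs.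
have := h1 (maxn N1 N2) (leq_maxl _ _); have := h2 (maxn N1 N2) (leq_maxr _ _).
lra.
Qed.

Lemma cvgD u v x y : cvg2 u x -> cvg2 v y ->
  cvg2 (fun n => u n + v n) (x + y).
Proof.
move=> hx hy r r0.
have r4 : 0 < r / 4 by rewrite divr_gt0.
have [N1 h1] := hx _ r4; have [N2 h2] := hy _ r4.
exists (maxn N1 N2) => n hn.
have := n2D_le (u n - x) (v n - y).
have -> : u n - x + (v n - y) = u n + v n - (x + y).
  by rewrite opprD addrACA.
have := h1 n (leq_trans (leq_maxl _ _) hn).
have := h2 n (leq_trans (leq_maxr _ _) hn); lra.
Qed.

Lemma para a b : n2 (a - b) + n2 (a + b) = 2 * n2 a + 2 * n2 b.
Proof. rewrite n2B n2D; lra. Qed.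

Lemma REsq (t : R) (c : C) :
  RE ((t%:C * c) * (t%:C * c)^*) = t ^+ 2 * (RE c ^+ 2 + IM c ^+ 2).
Proof. rewrite rmorphM /= conj_real !(REM, IMM, REJ, IMJ) /=. ring. Qed.
Lemma REsq2 (t : R) (c : C) :
  RE ((t%:C * c)^* * c) = t * (RE c ^+ 2 + IM c ^+ 2).
Proof. rewrite rmorphM /= conj_real !(REM, IMM, REJ, IMJ) /=. ring. Qed.

Lemma proj (M : V -> Prop) : M 0 ->
  (forall (a : C) x y, M x -> M y -> M (a *: x + y)) ->
  (forall u x, (forall n, M (u n)) -> cvg2 u x -> M x) ->
  forall y, exists m, M m /\ forall v, M v -> ip (y - m) v = 0.
Proof.
move=> M0 Mlin Mcl y.
pose S : classical_sets.set R := fun r => exists m, M m /\ r = n2 (y - m).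
pose d := inf S.
have Sne : classical_sets.nonempty S by exists (n2 (y - 0)), 0.
have Slb : classical_sets.has_lbound S.
  by exists 0 => r [m [_ ->]]; apply: n2_ge0.
have dle m : M m -> d <= n2 (y - m).
  by move=> hm; apply: (ge_inf Slb); exists m.
have d0 : 0 <= d by apply: lb_le_inf Sne _ => r [m [_ ->]]; apply: n2_ge0.
have hseq n : exists m, M m /\ n2 (y - m) < d + (n.+1%:R)^-1.
  have : d < d + (n.+1%:R)^-1 by rewrite ltrDl invr_gt0 ltr0Sn.
  by move/(inf_lt Sne) => [r [m [hm ->]] hr]; exists m.
have [ms hms] := functional_choice _ hseq.
have Mmid n k : M ((2^-1 : R)%:C *: (ms n + ms k)).
  have := Mlin (2^-1 : R)%:C (ms n + ms k) 0 _ M0; rewrite addr0; apply.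
  by have := Mlin 1 (ms n) (ms k) (hms n).1 (hms k).1; rewrite scale1r.
have bnd n k : n2 (ms k - ms n) <= 2 * (n.+1%:R)^-1 + 2 * (k.+1%:R)^-1.
  have e1 : (y - ms n) + (y - ms k) =
      (2 : R)%:C *: (y - (2^-1 : R)%:C *: (ms n + ms k)).
    rewrite scalerBr scalerA -rmorphM /= mulfV ?pnatr_eq0 // scale1r.
    by rewrite rmorph_nat scaler_nat mulr2n opprD addrACA.
  have e2 : (y - ms n) - (y - ms k) = ms k - ms n.
    by rewrite opprB addrC addrA subrK.
  have := para (y - ms n) (y - ms k); rewrite e1 e2 n2Zr expr2.
  have := dle _ (Mmid n k); have := (hms n).2; have := (hms k).2.
  set en := (n.+1%:R)^-1; set ek := (k.+1%:R)^-1; lra.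
have cms : cauchy2 ms.
  move=> r r0; have r4 : 0 < r / 4 by rewrite divr_gt0.
  have [N hN] := small _ r4; exists N => m n hm hn.
  have := bnd n m; have := hN m hm; have := hN n hn.
  set en := (n.+1%:R)^-1; set em := (m.+1%:R)^-1; lra.
have [m hm] := complete _ cms.
have Mm : M m by apply: Mcl hm => n; exact: (hms n).1.
have dm : n2 (y - m) <= d.
  apply/ler_addgt0Pr => de de0.
  pose t := de / (3 * (d + 1)).
  have t0 : 0 < t by rewrite divr_gt0 // mulr_gt0 // ltr_wpDl.
  have ht : t * (3 * (d + 1)) = de.
    rewrite /t mulrC mulrCA mulfV ?mulr1 //; apply/lt0r_neq0.
    by rewrite mulr_gt0 // ltr_wpDl.
  pose s := t * de / 3 / (t + 1).
  have t1 : 0 < t + 1 by lra.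
  have s0 : 0 < s by rewrite /s divr_gt0 // divr_gt0 // mulr_gt0.
  have hs : (t + 1) * s = t * de / 3.
    by rewrite /s mulrC divfK // lt0r_neq0.
  have de3 : 0 < de / 3 by rewrite divr_gt0.
  have [N1 h1] := hm _ s0; have [N2 h2] := small _ de3.
  pose n := maxn N1 N2.
  have hb := h1 n (leq_maxl _ _); have he := h2 n (leq_maxr _ _).
  have he1 : (n.+1%:R)^-1 <= 1 :> R by rewrite invf_le1 ?ler1n ?ltr0Sn.
  have ha := (hms n).2.
  have := n2D_le_t t (y - ms n) (ms n - m) t0.
  rewrite addrA subrK.
  set A := n2 (y - ms n) in ha *; set B := n2 (ms n - m) in hb *.
  set e := (n.+1%:R)^-1 in he he1 ha *.
  have A0 : 0 <= A by apply: n2_ge0.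
  have B0 : 0 <= B by apply: n2_ge0.
  have h3 : t * (1 + t) * A <= t * (1 + t) * (d + e).
    by apply: ler_wpM2l; [apply: mulr_ge0; lra | lra].
  have h4 : (t + 1) * B <= (t + 1) * s.
    by apply: ler_wpM2l; lra.
  have h5 : t * t * (d + e) <= t * t * (d + 1).
    by apply: ler_wpM2l; [apply: mulr_ge0; lra | lra].
  have h6 : t * e <= t * (de / 3) by apply: ler_wpM2l; lra.
  move=> hfin.
  have : t * n2 (y - m) <= t * (d + de) by nra.
  by rewrite ler_pM2l.
exists m; split => // v hv.
set c := ip (y - m) v.
pose q := RE c ^+ 2 + IM c ^+ 2.
have q0 : 0 <= q by rewrite /q addr_ge0 ?sqr_ge0.
have key (t : R) : 2 * t * q <= t ^+ 2 * q * n2 v.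
  have hM := Mlin (t%:C * c) v m hv Mm.
  have := dle _ hM.
  have -> : y - ((t%:C * c) *: v + m) = (y - m) - (t%:C * c) *: v.
    by rewrite opprD addrCA addrC.
  rewrite n2B n2Zc reZrc -/c REsq REsq2 -/q.
  move: dm; lra.
pose t := (n2 v + 1)^-1.
have nv0 : 0 <= n2 v by apply: n2_ge0.
have t0 : 0 < t by rewrite invr_gt0 ltr_wpDl.
have ht : t * (n2 v + 1) = 1 by rewrite mulVf // lt0r_neq0 // ltr_wpDl.
have h := key t.
have qq : q = 0.
  apply/eqP; rewrite eq_le q0 andbT.
  have h' : t * q * (1 + t) <= 0 by nra.
  have tq : t * q <= 0.
    by move: h'; rewrite pmulr_lle0 // ltr_wpDr // ltW.
  by move: tq; rewrite pmulr_rle0.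
have := sqr_ge0 (RE c); have := sqr_ge0 (IM c); move: qq; rewrite /q => qq s2 s1.
have r1 : RE c = 0 by apply/eqP; rewrite -sqrf_eq0; apply/eqP; lra.
have r2 : IM c = 0 by apply/eqP; rewrite -sqrf_eq0; apply/eqP; lra.
by apply: ceq.
Qed.

End IP.

Lemma sqrtC_lt (z e : C) : 0 <= z -> 0 < e -> (sqrtC z < e) = (RE z < RE e ^+ 2).
Proof.
move=> z0 e0; have e0' := ltW e0.
have z0' : 0 <= RE z by rewrite -lecR -ge0_real.
rewrite {1}(@ge0_real z z0) sqrtC_real // {1}(@ge0_real e e0') ltcR.
have he : 0 < RE e by rewrite -ltcR -ge0_real.
rewrite -{1}(ger0_norm (ltW he)) -sqrtr_sqr ltr_sqrt //.
by rewrite exprn_gt0.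
Qed.

Lemma hilbert_sum (U : lmodType C) (ipU : U -> U -> C) :
  is_hilbert ipU -> is_hilbert (ip_sum ipU).
Proof.
move=> hU.
have hcomp1 (a b : U) : hnorm ipU a <= hnorm (ip_sum ipU) (a, b).
  rewrite /hnorm /ip_sum /= ler_sqrtC ?lerDl ?(ipP _ _ hU) // qualifE /= ?(ipP _ _ hU) //.
  by rewrite addr_ge0 // (ipP _ _ hU).
have hcomp2 (a b : U) : hnorm ipU b <= hnorm (ip_sum ipU) (a, b).
  rewrite /hnorm /ip_sum /= ler_sqrtC ?lerDr ?(ipP _ _ hU) // qualifE /= ?(ipP _ _ hU) //.
  by rewrite addr_ge0 // (ipP _ _ hU).
split.
- move=> a x y z; rewrite /ip_sum /= !(ipL _ _ hU); ring.
- by move=> x y; rewrite /ip_sum rmorphD /= -!(ipJ _ _ hU).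
- by move=> x; rewrite /ip_sum addr_ge0 // (ipP _ _ hU).
- move=> [x1 x2]; rewrite /ip_sum /= => /eqP; rewrite paddr_eq0 ?(ipP _ _ hU) //.
  by case/andP => /eqP /(ipD _ _ hU) -> /eqP /(ipD _ _ hU) ->.
- move=> u hu.
  have c1 : hcauchy ipU (fun n => (u n).1).
    move=> e e0; have [N hN] := hu e e0; exists N => m n hm hn.
    apply: le_lt_trans (hN m n hm hn).
    exact: (hcomp1 ((u m).1 - (u n).1) ((u m).2 - (u n).2)).
  have c2 : hcauchy ipU (fun n => (u n).2).
    move=> e e0; have [N hN] := hu e e0; exists N => m n hm hn.
    apply: le_lt_trans (hN m n hm hn).
    exact: (hcomp2 ((u m).1 - (u n).1) ((u m).2 - (u n).2)).
  case: hU (hU) => _ _ _ _ hc hU.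
  have [x1 /(hcvgP _ _ hU) h1] := hc _ c1; have [x2 /(hcvgP _ _ hU) h2] := hc _ c2.
  exists (x1, x2) => e e0.
  have r0 : 0 < RE e ^+ 2 / 2.
    by rewrite divr_gt0 // exprn_gt0 // -ltcR -ge0_real // ltW.
  have [N1 hN1] := h1 _ r0; have [N2 hN2] := h2 _ r0.
  exists (maxn N1 N2) => n hn.
  have a1 := hN1 n (leq_trans (leq_maxl _ _) hn).
  have a2 := hN2 n (leq_trans (leq_maxr _ _) hn).
  rewrite /hnorm sqrtC_lt //; last by rewrite /ip_sum addr_ge0 // (ipP _ _ hU).
  rewrite /ip_sum /= RED; move: a1 a2; rewrite /n2; lra.
Qed.

Lemma sq_le (x y : R) : 0 <= x -> 0 <= y -> x ^+ 2 <= y ^+ 2 -> x <= y.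
Proof. move=> x0 y0 h; rewrite leNgt; apply/negP => h'; nra. Qed.

End Gen.
Arguments n2 {R V} ip x.
Arguments re {R V} ip x y.
Arguments cvg2 {R V} ip u x.
Arguments cauchy2 {R V} ip u.

Local Notation RE := complex.Re.
Local Notation IM := complex.Im.
Local Notation "x %:C" := (x%:C)%C (at level 1, format "x %:C") : ring_scope.

Theorem theorem8p2
  (R : realType)
  (H0 H1 Kd K : lmodType R[i])
  (ip0 : H0 -> H0 -> R[i]) (ip1 : H1 -> H1 -> R[i])
  (ipd : Kd -> Kd -> R[i]) (ipk : K -> K -> R[i])
  (* H0, Kd separable Hilbert spaces; H1, K Hilbert spaces *)
  (hH0 : is_hilbert ip0) (sH0 : separable ip0)
  (hKd : is_hilbert ipd) (sKd : separable ipd)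
  (hH1 : is_hilbert ip1) (hK : is_hilbert ipk)
  (* H1 ⊂ H0 dense subspace, bounded inclusion *)
  (i1 : H1 -> H0) (i1_lin : linmap i1) (i1_inj : injective i1)
  (i1_bd : bounded ip1 ip0 i1) (i1_dense : dense ip0 (fun x => exists h, i1 h = x))
  (* K ⊂ Kd dense subspace *)
  (iK : K -> Kd) (iK_lin : linmap iK) (iK_inj : injective iK)
  (iK_dense : dense ipd (fun x => exists k, iK k = x))
  (* T closed densely defined symmetric, with adjoint (DTs, Ts) *)
  (DT : H0 -> Prop) (T : H0 -> H0)
  (T_lin : lin_on DT T) (T_dense : dense ip0 DT) (T_closed : closed_op ip0 DT T)
  (T_sym : symmetric_op ip0 DT T)
  (DTs : H0 -> Prop) (Ts : H0 -> H0) (T_adj : is_adjoint ip0 DT T DTs Ts)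
  (H1_sub : forall h : H1, DTs (i1 h))
  (* trace map gamma : H1 -> K (+) K, bounded surjective, D(T) = Ker gamma *)
  (gam : H1 -> K * K) (gam_lin : linmap gam)
  (gam_bd : bounded ip1 (ip_sum ipk) gam) (gam_surj : forall k, exists h, gam h = k)
  (DT_ker : forall x, DT x <-> exists h, i1 h = x /\ gam h = 0)
  (* Sigma: bounded invertible self-adjoint on Kd (+) Kd, leaving K (+) K invariant *)
  (Sig : Kd * Kd -> Kd * Kd) (Sig_lin : linmap Sig)
  (Sig_bd : bounded (ip_sum ipd) (ip_sum ipd) Sig) (Sig_bij : bijective Sig)
  (Sig_sa : forall x y, ip_sum ipd (Sig x) y = ip_sum ipd x (Sig y))
  (Sig_inv : forall k : K * K, exists k', Sig (dsmap iK k) = dsmap iK k')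
  (* Green's formula *)
  (green : forall u v : H1,
     ip0 (Ts (i1 u)) (i1 v) - ip0 (i1 u) (Ts (i1 v))
     = ip_sum ipd ('i *: Sig (dsmap iK (gam u))) (dsmap iK (gam v)))
  (* Upsilon: unitary on Kd (+) Kd, leaving K (+) K invariant, commuting with Sigma *)
  (Ups : Kd * Kd -> Kd * Kd) (Ups_lin : linmap Ups) (Ups_bij : bijective Ups)
  (Ups_iso : forall x y, ip_sum ipd (Ups x) (Ups y) = ip_sum ipd x y)
  (Ups_inv : forall k : K * K, exists k', Ups (dsmap iK k) = dsmap iK k')
  (Ups_comm : forall x, Ups (Sig x) = Sig (Ups x))
  (* P := S^* restricted to { (a,b) in H1 (+) H1 | gamma b = Upsilon gamma a } *)
  (DP : H0 * H0 -> Prop)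
  (DP_def : forall x, DP x <-> exists a b : H1, x = (i1 a, i1 b) /\
                         dsmap iK (gam b) = Ups (dsmap iK (gam a)))
  (P : H0 * H0 -> H0 * H0)
  (P_def : forall x, P x = (Ts x.1, - Ts x.2))
  (P_sa : selfadjoint_op (ip_sum ip0) DP P)
  (P_fred : fredholm_op (ip_sum ip0) DP P)
  (* -i Sigma^* Upsilon positive definite (Sigma^* = Sigma) *)
  (pos : forall x : Kd * Kd, x <> 0 ->
     0 < ip_sum ipd (- 'i *: Sig (Ups x)) x) :
  (* P + epsilon : D(P) -> H0 (+) H0 is an isomorphism (D(P) with graph norm) *)
  (forall y : H0 * H0, exists x, [/\ DP x, P x + epsop x = y &
      forall x', DP x' -> P x' + epsop x' = y -> x' = x])
  /\ exists c : R[i], 0 < c /\ forall x, DP x ->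
       hnorm (ip_sum ip0) x + hnorm (ip_sum ip0) (P x)
         <= c * hnorm (ip_sum ip0) (P x + epsop x)
       /\ hnorm (ip_sum ip0) (P x + epsop x)
         <= c * (hnorm (ip_sum ip0) x + hnorm (ip_sum ip0) (P x)).
Proof.
have hW : is_hilbert (ip_sum ip0) := hilbert_sum _ _ _ hH0.
have hS : is_hilbert (ip_sum ipd) := hilbert_sum _ _ _ hKd.
set ipW := ip_sum ip0 in hW P_sa P_fred *.
case: P_sa => _ [[[DP0 DPl] Plin] Padj].
case: P_fred => _ Pcl _ _ _.
have P0 : P 0 = 0.
  have := Plin 1 0 0 DP0 DP0; rewrite scaler0 add0r scale1r -{1}(addr0 (P 0)).
  by move/addrI.
have DPB x y : DP x -> DP y -> DP (x - y) /\ P (x - y) = P x - P y.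
  move=> hx hy; have e : x - y = (-1) *: y + x by rewrite scaleN1r addrC.
  by rewrite e; split; [apply: DPl | rewrite Plin // scaleN1r addrC].
have epsB (x y : H0 * H0) : epsop (x - y) = epsop x - epsop y by [].
have n2eps x : n2 ipW (epsop x) = n2 ipW x by rewrite /n2 /ipW /ip_sum /= addrC.
have ipeps x y : ipW (epsop x) y = ipW x (epsop y) by rewrite /ipW /ip_sum /= addrC.
have Sig0 : Sig 0 = 0.
  have := Sig_lin 1 0 0; rewrite scaler0 add0r scale1r -{1}(addr0 (Sig 0)).
  by move/addrI.
have keyK (g : Kd * Kd) : 0 <= RE (ip_sum ipd ('i *: Sig g) (Ups g)).
  have [-> | gn0] := eqVneq g 0.
    by rewrite Sig0 scaler0 (ip0l _ _ _ hS).
  have := pos g (elimN eqP gn0).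
  rewrite (ipZl _ _ _ hS) (ipZl _ _ _ hS) (Sig_sa g) (ipJ _ _ _ hS (Sig (Ups g))).
  set z := ip_sum ipd (Sig (Ups g)) g.
  rewrite ltcE => /andP[/eqP h1 h2].
  move: h1 h2; rewrite !(REM, IMM, REJ, IMJ, REN, IMN) REi IMi /=; lra.
have key x : DP x -> 0 <= re ipW (P x) (epsop x).
  case/DP_def => a [b [-> hab]].
  rewrite P_def /re /ipW /ip_sum /= RED (ipNl _ _ _ hH0) REN.
  rewrite (ipJ _ _ _ hH0 (i1 a)) REJ.
  have := keyK (dsmap iK (gam a)); rewrite -hab -green RED REN; lra.
have lower x : DP x -> n2 ipW (P x) + n2 ipW x <= n2 ipW (P x + epsop x).
  move=> hx; rewrite (n2D _ _ _ hW) n2eps; have := key x hx; lra.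
have n20 : n2 ipW 0 = 0 by rewrite /n2 (ip0l _ _ _ hW).
have inj x : DP x -> P x + epsop x = 0 -> x = 0.
  move=> hx h0; apply: (n2_eq0 _ _ _ hW _); apply/eqP; rewrite eq_le n2_ge0 // andbT.
  have := lower x hx; rewrite h0 n20; have := n2_ge0 _ _ _ hW (P x); lra.
have diffeq x y : DP x -> DP y ->
    P (x - y) + epsop (x - y) = (P x + epsop x) - (P y + epsop y).
  by move=> hx hy; rewrite (DPB x y hx hy).2 epsB opprD addrACA.
pose M z := exists x, DP x /\ P x + epsop x = z.
have M0 : M 0 by exists 0; rewrite P0 add0r.
have Mlin (a : R[i]) x y : M x -> M y -> M (a *: x + y).
  move=> [x1 [h1 <-]] [y1 [h2 <-]]; exists (a *: x1 + y1); split.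
    exact: DPl.
  by rewrite Plin // scalerDr addrACA.
have Mcl u y : (forall n, M (u n)) -> cvg2 ipW u y -> M y.
  move=> hM hy.
  have [xs hxs] := functional_choice _ hM.
  have cu := cvg_cauchy _ _ _ hW _ _ hy.
  have bd m n : n2 ipW (P (xs m) - P (xs n)) + n2 ipW (xs m - xs n)
                <= n2 ipW (u m - u n).
    have [hd hP] := DPB _ _ (hxs m).1 (hxs n).1.
    have := lower _ hd.
    by rewrite (diffeq _ _ (hxs m).1 (hxs n).1) (hxs m).2 (hxs n).2 hP.
  have c1 : cauchy2 ipW xs.
    move=> r r0; have [N hN] := cu r r0; exists N => m n hm hn.
    have := hN m n hm hn; have := bd m n; have := n2_ge0 _ _ _ hW (P (xs m) - P (xs n)); lra.
  have c2 : cauchy2 ipW (fun n => P (xs n)).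
    move=> r r0; have [N hN] := cu r r0; exists N => m n hm hn.
    have := hN m n hm hn; have := bd m n; have := n2_ge0 _ _ _ hW (xs m - xs n); lra.
  have [x hx] := complete _ _ _ hW _ c1; have [p hp] := complete _ _ _ hW _ c2.
  have [Dx Px] := Pcl xs x p (fun n => (hxs n).1) ((hcvgP _ _ _ hW _ _).2 hx)
                  ((hcvgP _ _ _ hW _ _).2 hp).
  have he : cvg2 ipW (fun n => epsop (xs n)) (epsop x).
    move=> r r0; have [N hN] := hx r r0; exists N => n hn.
    by rewrite -epsB n2eps; apply: hN.
  have hs := cvgD _ _ _ hW _ _ _ _ hp he.
  have hu : cvg2 ipW u (p + epsop x).
    move=> r r0; have [N hN] := hs r r0; exists N => n hn.
    by rewrite -(hxs n).2; apply: hN.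
  by exists x; split => //; rewrite Px (cvg_uniq _ _ _ hW _ _ _ hy hu).
have surj y : M y.
  have [m [Mm hm]] := proj _ _ _ hW _ M0 Mlin Mcl y.
  set w := y - m in hm.
  have [Dw Pw] : DP w /\ P w = - epsop w.
    apply/(Padj w (- epsop w)) => u hu.
    have h0 : ipW (P u + epsop u) w = 0.
      rewrite (ipJ _ _ _ hW) hm ?conjC0 //; by exists u.
    rewrite (ipNr _ _ _ hW) -ipeps; apply/eqP; rewrite -subr_eq0 opprK.
    by rewrite -(ipDl _ _ _ hW) h0.
  have : w = 0 by apply: inj => //; rewrite Pw addNr.
  by move/eqP; rewrite subr_eq0 => /eqP ->.
split.
  move=> y; have [x [hx hxy]] := surj y; exists x; split => // x' hx' hx'y.
  have [hd _] := DPB _ _ hx' hx.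
  apply/eqP; rewrite -subr_eq0; apply/eqP; apply: inj => //.
  by rewrite diffeq // hx'y hxy subrr.
exists 2; split => // x hx.
rewrite !(hnormE _ _ _ hW).
have two : (2 : R[i]) = (2 : R)%:C by rewrite rmorph_nat.
rewrite two -!rmorphD -!rmorphM /= !lecR.
have hl := lower x hx.
have hu : n2 ipW (P x + epsop x) <= 2 * n2 ipW (P x) + 2 * n2 ipW x.
  by have := n2D_le _ _ _ hW (P x) (epsop x); rewrite n2eps.
have a0 := n2_ge0 _ _ _ hW x; have b0 := n2_ge0 _ _ _ hW (P x);
have s0 := n2_ge0 _ _ _ hW (P x + epsop x).
set a := n2 ipW x in hl hu a0 *; set b := n2 ipW (P x) in hl hu b0 *.
set s := n2 ipW (P x + epsop x) in hl hu s0 *.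
have A2 := sqr_sqrtr a0; have B2 := sqr_sqrtr b0; have S2 := sqr_sqrtr s0.
have A0 := sqrtr_ge0 a; have B0 := sqrtr_ge0 b; have S0 := sqrtr_ge0 s.
set A := Num.sqrt a in A2 A0 *; set B := Num.sqrt b in B2 B0 *;
set S := Num.sqrt s in S2 S0 *.
rewrite -A2 -B2 -S2 in hl hu.
by split; apply: sq_le; nra.
Qed.
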